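(* Let $\Lambda$ be a finite, strongly connected $k$-graph with exactly one vertex, $y$ an $\mathbb{R}_+$-functor on $\Lambda$, and $\theta\in(0,\infty)$ such that condition (w-I) holds: $\rho(B_i(y,\theta))>1$ for all $1\le i\le k$. Then the function $w_{y,\theta}:F\mathcal{B}_\Lambda\to(0,\infty)$, $w_{y,\theta}(\lambda)=e^{-y(\lambda)}\big(\rho(B(y,\theta))^{-d(\lambda)}\big)^{1/\theta}$, is a weight on $\mathcal{B}_\Lambda$.
   Context: A $k$-graph is a countable small category $\Lambda$ with a degree functor $d:\Lambda\to\mathbb{N}^k$ satisfying unique factorization: if $d(\lambda)=m+n$ there are unique $\eta,\nu$ with $\lambda=\eta\nu$, $d(\eta)=m$, $d(\nu)=n$. $\Lambda^n=d^{-1}(n)$, $\Lambda^0$ = vertices, $r,s$ range/source; $e_i$ standard basis; finite: each $\Lambda^n$ finite; strongly connected: $v\Lambda w\ne\emptyset$ for all vertices (for finite $\Lambda$ this entails $\Lambda^{e_i}\ne\emptyset$ for all $i$). An $\mathbb{R}_+$-functor is $y:\Lambda\to[0,\infty)$ with $y(v)=0$ on vertices and $y(\lambda\nu)=y(\lambda)+y(\nu)$ when $s(\lambda)=r(\nu)$. With one vertex, $B_i(y,\theta)$ is the $1\times1$ matrix $\sum_{h\in\Lambda^{e_i}}e^{-\theta y(h)}=\rho(B_i(y,\theta))$; $\rho(B(y,\theta))^m=\prod_i\rho(B_i(y,\theta))^{m_i}$. A Bratteli diagram $\mathcal{B}$ has finite vertex sets $\mathcal{V}_n$ ($n\ge0$)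 and finite edge sets $\mathcal{E}_n$ ($n\ge1$), edges in $\mathcal{E}_n$ going from $\mathcal{V}_n$ to $\mathcal{V}_{n-1}$. A finite path of length $n$ is $f_1\cdots f_n$ with $f_j\in\mathcal{E}_j$, $s(f_j)=r(f_{j+1})$ (length-0 paths: vertices of $\mathcal{V}_0$); $F^n\mathcal{B}$ the set of these, $F\mathcal{B}=\bigcup_nF^n\mathcal{B}$. A weight on $\mathcal{B}$ is $w:F\mathcal{B}\to[0,\infty)$ with (i) $w(v)\le1$ for $v\in\mathcal{V}_0$; (ii) $\lim_n\sup\{w(\gamma):\gamma\in F^n\mathcal{B}\}=0$; (iii) $w(\gamma)\le w(\eta)$ whenever $\eta$ is an initial segment of $\gamma$. Stationary $k$-Bratteli diagram $\mathcal{B}_\Lambda$: $\mathcal{V}_n=\Lambda^0$; for $n\ge1$, $n\equiv i\pmod k$, $i\in\{1,\dots,k\}$, $\mathcal{E}_n$ has one edge from $q\in\mathcal{V}_n$ to $p\in\mathcal{V}_{n-1}$ for each $\lambda\in p\Lambda^{e_i}q$. A finite path $f_1\cdots f_n$ is identified with the morphism $f_1\cdots f_n\in\Lambda$, on which $y$ and $d$ are evaluated. *)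

(* Defs.v *)
From Stdlib Require Import Reals List Arith.
Import ListNotations.
Open Scope R_scope.

(* Standard basis of N^k, 0-based: [ebasis i] is e_{i+1} of the paper. *)
Definition ebasis (i : nat) : nat -> nat := fun j => if Nat.eqb j i then 1%nat else 0%nat.

(* A k-graph with exactly one vertex: a countable small category with one
   object (i.e. a monoid; the vertex is the identity morphism [kvtx]),
   a degree functor into N^k (encoded as nat -> nat vanishing at indices >= k),
   and unique factorisation. *)
Record KGraph1 (k : nat) : Type := {
  kmor :> Type;
  kcmp : kmor -> kmor -> kmor;            (* kcmp a b = a b  (a after b) *)
  kvtx : kmor;
  kdeg : kmor -> nat -> nat;
  kcmp_assoc : forall a b c, kcmp a (kcmp b c) = kcmp (kcmp a b) c;
  kvtx_l : forall a, kcmp kvtx a = a;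
  kvtx_r : forall a, kcmp a kvtx = a;
  kdeg_supp : forall a i, (k <= i)%nat -> kdeg a i = 0%nat;
  kdeg_vtx : forall i, kdeg kvtx i = 0%nat;
  kdeg_cmp : forall a b i, kdeg (kcmp a b) i = (kdeg a i + kdeg b i)%nat;
  kfact : forall a (m n : nat -> nat),
      (forall i, (k <= i)%nat -> m i = 0%nat /\ n i = 0%nat) ->
      (forall i, kdeg a i = (m i + n i)%nat) ->
      exists eta nu, a = kcmp eta nu /\ (forall i, kdeg eta i = m i) /\
        (forall i, kdeg nu i = n i) /\
        (forall eta' nu', a = kcmp eta' nu' -> (forall i, kdeg eta' i = m i) ->
           (forall i, kdeg nu' i = n i) -> eta' = eta /\ nu' = nu);
  kcountable : exists f : kmor -> nat, forall a b, f a = f b -> a = b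
}.

Arguments kcmp {k} _ _ _.
Arguments kvtx {k} _.
Arguments kdeg {k} _ _ _.

(* Finiteness of Lambda: [enum n] is a duplicate-free list of Lambda^n. *)
Definition is_enum {k} (K : KGraph1 k) (enum : (nat -> nat) -> list (kmor k K)) : Prop :=
  forall n, NoDup (enum n) /\ forall a, In a (enum n) <-> (forall i, kdeg K a i = n i).

Definition is_Rfunctor {k} (K : KGraph1 k) (y : kmor k K -> R) : Prop :=
  (forall a, 0 <= y a) /\ y (kvtx K) = 0 /\
  (forall a b, y (kcmp K a b) = y a + y b).

(* rho(B_{i+1}(y,theta)) = sum_{h in Lambda^{e_{i+1}}} exp(-theta y(h))  (one vertex). *)
Definition rhoB {k} (K : KGraph1 k) (enum : (nat -> nat) -> list (kmor k K))
  (y : kmor k K -> R) (theta : R) (i : nat) : R :=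
  fold_right (fun h acc => exp (- theta * y h) + acc) 0 (enum (ebasis i)).

Fixpoint prod_upto (n : nat) (f : nat -> R) : R :=
  match n with O => 1 | S n' => prod_upto n' f * f n' end.

(* rho(B(y,theta))^{d(lambda)} = prod_i rho(B_i(y,theta))^{d(lambda)_i} *)
Definition rhoB_pow {k} (K : KGraph1 k) enum y theta (a : kmor k K) : R :=
  prod_upto k (fun i => rhoB K enum y theta i ^ kdeg K a i).

Definition wyt {k} (K : KGraph1 k) enum y theta (a : kmor k K) : R :=
  exp (- y a) * Rpower (/ rhoB_pow K enum y theta a) (/ theta).

(* Bratteli diagrams: vertex sets V_n, edge sets E_n (n >= 1, E_{n+1} indexed
   as BE (S n)), edges of E_{n+1} go from V_{n+1} (source) to V_n (range). *)
Record Bratteli : Type := {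
  BV : nat -> Type;
  BE : nat -> Type;
  Bsrc : forall n, BE (S n) -> BV (S n);
  Brng : forall n, BE (S n) -> BV n
}.

(* Finite paths f_1 ... f_n, indexed by length n and final source vertex.
   [fp0 v] is the length-0 path (vertex v in V_0);
   [fpS p e _] appends the edge e in E_{n+1} to p (requires r(e) = s(p)). *)
Inductive fpath (B : Bratteli) : forall n : nat, BV B n -> Type :=
| fp0 : forall v : BV B 0, fpath B 0 v
| fpS : forall n v (p : fpath B n v) (e : BE B (S n)),
    Brng B n e = v -> fpath B (S n) (Bsrc B n e).

Inductive fprefix (B : Bratteli) :
  forall n v m u, fpath B n v -> fpath B m u -> Prop :=
| fpref_refl : forall n v (p : fpath B n v), fprefix B n v n v p p
| fpref_S : forall n v m u (p : fpath B n v) (q : fpath B m u)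
    (e : BE B (S m)) (H : Brng B m e = u),
    fprefix B n v m u p q -> fprefix B n v (S m) (Bsrc B m e) p (fpS B m u q e H).

(* Weight on a Bratteli diagram.  Condition (ii),
   lim_n sup{w(g) : g in F^n} = 0, is written out with epsilon-N
   (the sup is over a finite set of nonnegative reals). *)
Definition is_weight (B : Bratteli) (w : forall n v, fpath B n v -> R) : Prop :=
  (forall n v (p : fpath B n v), 0 <= w n v p) /\
  (forall v : BV B 0, w 0%nat v (fp0 B v) <= 1) /\
  (forall eps, 0 < eps -> exists N : nat, forall n, (N <= n)%nat ->
      forall v (p : fpath B n v), w n v p <= eps) /\
  (forall n v m u (p : fpath B n v) (q : fpath B m u),
      fprefix B n v m u p q -> w m u q <= w n v p).

(* Stationary k-Bratteli diagram of a one-vertex k-graph: V_n = {vertex};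
   E_{m+1} = Lambda^{e_i} with i = (m mod k) + 1, i.e. n = m+1 ≡ i (mod k). *)
Definition BL_E {k} (K : KGraph1 k) (n : nat) : Type :=
  match n with
  | O => Empty_set
  | S m => { a : kmor k K | forall j, kdeg K a j = ebasis (m mod k) j }
  end.

Definition BL {k} (K : KGraph1 k) : Bratteli :=
  {| BV := fun _ => unit; BE := BL_E K;
     Bsrc := fun _ _ => tt; Brng := fun _ _ => tt |}.

Fixpoint fpath_mor {k} (K : KGraph1 k) n v (p : fpath (BL K) n v) : kmor k K :=
  match p with
  | fp0 _ _ => kvtx K
  | fpS _ n' v' p' e _ => kcmp K (fpath_mor K n' v' p') (proj1_sig (e : BL_E K (S n')))
  end.

Definition wyt_path {k} (K : KGraph1 k) enum y theta :
  forall n v, fpath (BL K) n v -> R :=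
  fun n v p => wyt K enum y theta (fpath_mor K n v p).

(* Main.v *)
Require Import Defs.
From Stdlib Require Import Reals List Arith Lra Lia.
Open Scope R_scope.

Lemma exp_le' x y : x <= y -> exp x <= exp y.
Proof. intros [H|H]; [left; apply exp_increasing; auto| subst; lra]. Qed.

Lemma ln_le' x y : 0 < x -> x <= y -> ln x <= ln y.
Proof. intros Hx [H|H]; [left; apply ln_increasing; auto| subst; lra]. Qed.

Lemma prod_ge1 n f : (forall i, (i < n)%nat -> 1 <= f i) -> 1 <= prod_upto n f.
Proof.
  induction n; simpl; intros H; [lra|].
  assert (1 <= prod_upto n f) by (apply IHn; intros; apply H; lia).
  assert (1 <= f n) by (apply H; lia). nra.
Qed.

Lemma prod_ge_one n f : (forall i, (i < n)%nat -> 1 <= f i) ->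
  forall i, (i < n)%nat -> f i <= prod_upto n f.
Proof.
  induction n; simpl; intros H i Hi; [lia|].
  assert (1 <= prod_upto n f) by (apply prod_ge1; intros; apply H; lia).
  assert (1 <= f n) by (apply H; lia).
  destruct (Nat.eq_dec i n) as [->|Hne]; [nra|].
  assert (f i <= prod_upto n f) by (apply IHn; [intros; apply H; lia| lia]).
  nra.
Qed.

Lemma prod_mult n f g : prod_upto n (fun i => f i * g i) = prod_upto n f * prod_upto n g.
Proof. induction n; simpl; [ring| rewrite IHn; ring]. Qed.

Lemma prod_one n : prod_upto n (fun _ => 1) = 1.
Proof. induction n; simpl; [ring| rewrite IHn; ring]. Qed.

Fixpoint rmin (f : nat -> R) (j : nat) : R :=
  match j with O => f O | S j' => Rmin (rmin f j') (f (S j')) end.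

Lemma rmin_le f j i : (i <= j)%nat -> rmin f j <= f i.
Proof.
  induction j; simpl; intros H.
  - assert (i = 0%nat) by lia; subst; lra.
  - destruct (Nat.eq_dec i (S j)) as [->|Hne]; [apply Rmin_r|].
    eapply Rle_trans; [apply Rmin_l| apply IHj; lia].
Qed.

Lemma rmin_gt f j : (forall i, (i <= j)%nat -> 1 < f i) -> 1 < rmin f j.
Proof.
  induction j; simpl; intros H; [apply H; lia|].
  apply Rmin_glb_lt; [apply IHj; intros; apply H; lia| apply H; lia].
Qed.

Section S.
Variables (k : nat) (K : KGraph1 k) (enum : (nat -> nat) -> list (kmor k K))
  (y : kmor k K -> R) (theta : R).
Hypothesis Hk : (1 <= k)%nat.
Hypothesis Hy : is_Rfunctor K y.
Hypothesis Ht : 0 < theta.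
Hypothesis Hr : forall i, (i < k)%nat -> 1 < rhoB K enum y theta i.

Let P a := rhoB_pow K enum y theta a.
Let Q a := y a + / theta * ln (P a).

Lemma P_ge1 a : 1 <= P a.
Proof.
  unfold P, rhoB_pow. apply prod_ge1. intros i Hi.
  apply pow_R1_Rle. left. apply Hr; auto.
Qed.


Lemma prod_ext n f g : (forall i, f i = g i) -> prod_upto n f = prod_upto n g.
Proof. induction n; simpl; intros H; [auto| rewrite IHn, H; auto]. Qed.

Lemma P_mult a b : P (kcmp K a b) = P a * P b.
Proof.
  unfold P, rhoB_pow. rewrite <- prod_mult. apply prod_ext. intros i.
  rewrite kdeg_cmp, pow_add. auto.
Qed.

Lemma P_vtx : P (kvtx K) = 1.
Proof.
  unfold P, rhoB_pow. rewrite <- (prod_one k). apply prod_ext. intros i.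
  rewrite kdeg_vtx. auto.
Qed.

Lemma w_eq a : wyt K enum y theta a = exp (- Q a).
Proof.
  unfold wyt, Q, Rpower. fold (P a).
  pose proof (P_ge1 a).
  rewrite ln_Rinv by lra. rewrite <- exp_plus. f_equal. ring.
Qed.

Lemma Q_ge0 a : 0 <= Q a.
Proof.
  unfold Q. destruct Hy as [H0 _].
  pose proof (P_ge1 a). pose proof (ln_le' 1 (P a) ltac:(lra) H).
  rewrite ln_1 in H1. pose proof (H0 a).
  assert (0 < / theta) by (apply Rinv_0_lt_compat; lra). nra.
Qed.

Lemma Q_mult a b : Q (kcmp K a b) = Q a + Q b.
Proof.
  unfold Q. destruct Hy as [_ [_ H]]. rewrite H, P_mult.
  pose proof (P_ge1 a). pose proof (P_ge1 b).
  rewrite ln_mult by lra. ring.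
Qed.

Lemma Q_vtx : Q (kvtx K) = 0.
Proof. unfold Q. destruct Hy as [_ [H _]]. rewrite H, P_vtx, ln_1. ring. Qed.

Let r := rmin (rhoB K enum y theta) (k - 1).
Let c := / theta * ln r.

Lemma r_gt1 : 1 < r.
Proof. apply rmin_gt. intros; apply Hr; lia. Qed.

Lemma c_pos : 0 < c.
Proof.
  unfold c. pose proof r_gt1. pose proof (ln_increasing 1 r ltac:(lra) H).
  rewrite ln_1 in H0. apply Rmult_lt_0_compat; auto. apply Rinv_0_lt_compat; lra.
Qed.

Lemma Q_edge m (e : BL_E K (S m)) : c <= Q (proj1_sig e).
Proof.
  destruct e as [a Ha]. simpl.
  set (i := (m mod k)%nat).
  assert (Hi : (i < k)%nat) by (apply Nat.mod_upper_bound; lia).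
  assert (r <= P a).
  { unfold P, rhoB_pow.
    assert (Hf : forall j, (j < k)%nat -> 1 <= rhoB K enum y theta j ^ kdeg K a j)
      by (intros j Hj; apply pow_R1_Rle; left; apply Hr; auto).
    pose proof (prod_ge_one k _ Hf i Hi) as Hp. cbv beta in Hp.
    eapply Rle_trans; [| exact Hp].
    rewrite Ha. unfold ebasis. rewrite Nat.eqb_refl. simpl. rewrite Rmult_1_r.
    apply rmin_le. lia. }
  unfold Q, c. destruct Hy as [H0 _]. pose proof (H0 a).
  pose proof r_gt1.
  pose proof (ln_le' r (P a) ltac:(lra) H).
  assert (0 < / theta) by (apply Rinv_0_lt_compat; lra). nra.
Qed.

Lemma Q_path n v (p : fpath (BL K) n v) : INR n * c <= Q (fpath_mor K n v p).
Proof.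
  induction p; simpl.
  - rewrite Q_vtx. lra.
  - rewrite Q_mult. pose proof (Q_edge n e). change (INR (S n) * c <= Q (fpath_mor K n v p) + Q (proj1_sig (e : BL_E K (S n)))). rewrite S_INR. lra.
Qed.

Lemma w_prefix n v m u (p : fpath (BL K) n v) (q : fpath (BL K) m u) :
  fprefix (BL K) n v m u p q -> wyt_path K enum y theta m u q <= wyt_path K enum y theta n v p.
Proof.
  intros H. induction H; [lra|].
  eapply Rle_trans; [| exact IHfprefix].
  unfold wyt_path in *. simpl. rewrite !w_eq, Q_mult.
  apply exp_le'. pose proof (Q_ge0 (proj1_sig (e : BL_E K (S m)))). lra.
Qed.

End S.

Theorem proposition6p7 (k : nat) (K : KGraph1 k)
  (enum : (nat -> nat) -> list (kmor k K)) (y : kmor k K -> R) (theta : R) :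
  (1 <= k)%nat ->
  is_enum K enum ->
  is_Rfunctor K y ->
  0 < theta ->
  (forall i, (i < k)%nat -> 1 < rhoB K enum y theta i) ->
  is_weight (BL K) (wyt_path K enum y theta).
Proof.
  intros Hk _ Hy Ht Hr. split; [|split; [|split]].
  - intros n v p. unfold wyt_path. rewrite w_eq by auto. left; apply exp_pos.
  - intros v. unfold wyt_path. simpl. rewrite w_eq, Q_vtx by auto.
    rewrite Ropp_0, exp_0. lra.
  - intros eps Heps.
    pose proof (c_pos k K enum y theta Hk Ht Hr) as Hc.
    destruct (INR_archimed _ (- ln eps) Hc) as [N HN].
    exists N. intros n Hn v p. unfold wyt_path. rewrite w_eq by auto.
    pose proof (Q_path k K enum y theta Hk Hy Ht Hr n v p).
    apply le_INR in Hn.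
    rewrite <- (exp_ln eps Heps). apply exp_le'. nra.
  - intros. apply w_prefix; auto.
Qed.
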